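(* Let $X,Y$ be Banach spaces, $f:X\to Y$ a function, $G:X\rightrightarrows Y$ a multifunction and $\overline{x}\in X$ such that $0\in f(\overline{x})+G(\overline{x})$. If $f$ is calm at $\overline{x}$, then $(f,G)$ is locally sum-stable around $(\overline{x},f(\overline{x}),-f(\overline{x}))$.
   Context: $f$ is calm at $\overline{x}$ if there exist $\alpha,l>0$ with $\|f(x)-f(\overline{x})\|\le l\|x-\overline{x}\|$ for all $x\in B(\overline{x},\alpha)$ ($B$ the open ball). For multifunctions $F,G:X\rightrightarrows Y$ and $(\overline{x},\overline{y},\overline{z})$ with $\overline{y}\in F(\overline{x})$, $\overline{z}\in G(\overline{x})$, the pair $(F,G)$ is locally sum-stable around $(\overline{x},\overline{y},\overline{z})$ if for every $\varepsilon>0$ there is $\delta>0$ such that for every $x\in B(\overline{x},\delta)$ and every $w\in(F+G)(x)\cap B(\overline{y}+\overline{z},\delta)$ there exist $y\in F(x)\cap B(\overline{y},\varepsilon)$ and $z\in G(x)\cap B(\overline{z},\varepsilon)$ with $w=y+z$. A function $f$ is viewed as the multifunction $x\mapsto\{f(x)\}$. *)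

(* Defs.v *)
(* Banach spaces = completeNormedModType over R : realType. *)
From HB Require Import structures.
From mathcomp Require Import all_boot all_order all_algebra.
From mathcomp Require Import all_classical all_reals all_analysis.
Set Implicit Arguments. Unset Strict Implicit. Unset Printing Implicit Defensive.
Import Order.TTheory GRing.Theory Num.Theory.
Import numFieldNormedType.Exports.
Local Open Scope classical_set_scope.
Local Open Scope ring_scope.

Definition oball {R : realType} {X : normedModType R} (x : X) (r : R) : set X :=
  [set y | `|y - x| < r].

Definition calm_at {R : realType} {X Y : normedModType R} (f : X -> Y) (xbar : X) : Prop :=
  exists alpha l : R, 0 < alpha /\ 0 < l /\
    forall x, oball xbar alpha x -> `|f x - f xbar| <= l * `|x - xbar|.

Definition mf_sum {R : realType} {X Y : normedModType R} (F G : X -> set Y) : X -> set Y :=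
  fun x => [set w | exists y z, F x y /\ G x z /\ w = y + z].

Definition mf_of_fun {R : realType} {X Y : normedModType R} (f : X -> Y) : X -> set Y :=
  fun x => [set f x].

Definition locally_sum_stable {R : realType} {X Y : normedModType R}
  (F G : X -> set Y) (xbar : X) (ybar zbar : Y) : Prop :=
  forall eps : R, 0 < eps -> exists delta : R, 0 < delta /\
    forall x w, oball xbar delta x -> mf_sum F G x w -> oball (ybar + zbar) delta w ->
      exists y z, F x y /\ oball ybar eps y /\ G x z /\ oball zbar eps z /\ w = y + z.

(* Main.v *)
Require Import Defs.
From HB Require Import structures.
From mathcomp Require Import all_boot all_order all_algebra.
From mathcomp Require Import all_classical all_reals all_analysis.
Import Order.TTheory GRing.Theory Num.Theory.
Import numFieldNormedType.Exports.
Local Open Scope classical_set_scope.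
Local Open Scope ring_scope.

Theorem proposition4p6 (R : realType) (X Y : completeNormedModType R)
  (f : X -> Y) (G : X -> set Y) (xbar : X) :
  mf_sum (mf_of_fun f) G xbar 0 ->
  calm_at f xbar ->
  locally_sum_stable (mf_of_fun f) G xbar (f xbar) (- f xbar).
Proof.
move=> _ [a [l [a0 [l0 Hc]]]] eps e0.
have l1 : 0 < l + 1 by rewrite ltr_wpDl // ltW.
set d := Num.min a (eps / (l + 1)).
have ed : 0 < eps / (l + 1) by rewrite divr_gt0.
have d0 : 0 < d by rewrite lt_min a0 ed.
have dle : d * (l + 1) <= eps.
  by rewrite -ler_pdivlMr // ge_min lexx orbT.
exists d; split => // x w Hx [y [z [Hy [Hz ->]]]] Hw.
rewrite /mf_of_fun /= in Hy; subst y.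
exists (f x), z; split; first by [].
have Hxa : oball xbar a x.
  by apply: (lt_le_trans Hx); rewrite ge_min lexx.
have Hfx := Hc x Hxa.
have Hxd : `|x - xbar| < d by [].
have Hlt : l * `|x - xbar| <= l * d by rewrite ler_pM2l // ltW.
split.
  rewrite /oball /=; apply: (le_lt_trans Hfx); apply: (le_lt_trans Hlt).
  apply: (lt_le_trans _ dle); rewrite mulrDr mulr1 mulrC ltrDl //.
split; first by [].
split; last by [].
rewrite /oball /= opprK.
move: Hw; rewrite /oball /= subrr subr0 => Hw.
have -> : z + f xbar = (f x + z) - (f x - f xbar).
  by rewrite opprB [f x + z]addrC -addrA (addrCA (f x)) subrr addr0.
apply: (le_lt_trans (ler_normB _ _)).
apply: (lt_le_trans _ dle).
rewrite mulrDr mulr1 addrC.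
apply: ltr_leD; last exact: ltW.
apply: (le_lt_trans Hfx); rewrite [d * l]mulrC.
by rewrite ltr_pM2l.
Qed.
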